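(* Let $\Delta\ge3$. Given a proper $\Delta$-edge coloring with colors $1,\dots,\Delta$ and a solution of $\Pi^{\Delta}$ on a $\Delta$-regular graph, a solution of $\Pi^{\mathsf{orcx}}$ can be computed in $0$ rounds. Equivalently, $\Pi^{\Delta}\times\mathrm{EC}_\Delta\xrightarrow{0}\Pi^{\mathsf{orcx}}$, where $\mathrm{EC}_\Delta$ is the $\Delta$-edge coloring problem.
   Context: Node-edge-checkable problems $(\Sigma,\mathcal{N},\mathcal{E})$ label half-edges of a $\Delta$-regular graph. $\mathcal{N}$ lists the allowed multisets of the $\Delta$ labels around a node and $\mathcal{E}$ the allowed multisets of the $2$ labels on an edge. Relaxation. $\Pi\xrightarrow{0}\Pi'$ means there is a map $f$ with the following properties. For every $C\in\mathcal{N}_\Pi$ and position $j$, $f$ assigns a label $f(C,j)\in\Sigma_{\Pi'}$. The map must satisfy: - it maps node configurations to node configurations of $\Pi'$; - whenever the $j$-th entry of $C$ and the $j'$-th entry of $C'$ form an element of $\mathcal{E}_\Pi$, then $f(C,j)f(C',j')\in\mathcal{E}_{\Pi'}$. Product. $\Pi\times\Pi'$ has paired labels; node (resp. edge) configurations are those whose first and second coordinates form node (resp. edge) configurations of $\Pi$ and $\Pi'$, respectively. $\mathrm{EC}_\Delta$ has labels $\{1,\dots,\Delta\}$, node configuration $1\,2\cdots\Delta$, and edge configurations $i\,i$. $\Pi^{\Delta}$ has labels $(y,z)\in\{1,\dots,\Delta\}^2$ and node configurations $c\cdots c$ for each label $c$. Its edge configurations are the $(y,z)(y',z')$ such that at least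 one of the following holds: - (1) $y\ne1\ne z$, $y\ne y'$ and $z\ne z'$ (or symmetrically $y'\ne1\ne z'$, $y\ne y'$ and $z\ne z'$); - (2) $y=y'=1$, $z\ne1\ne z'$ and $z\ne z'$; - (3) $z=z'=1$, $y\ne1\ne y'$ and $y\ne y'$. $\Pi^{\mathsf{orcx}}$ has labels $\Sigma_1\cup\Sigma_2$ with $\Sigma_1=\{\mathsf O,\mathsf R,\mathsf C,\mathsf X\}$ and $\Sigma_2=\{\mathsf o,\mathsf r,\mathsf c,\mathsf x\}$. Its node configurations are the $L_1\dots L_\Delta$ such that: - exactly one $L_k$ lies in $\Sigma_1$; and - there are distinct $k,k'$ such that all other $L_{k''}\in\{\mathsf O,\mathsf o\}$, and either ($L_k\in\{\mathsf X,\mathsf x\}$ and $L_{k'}\in\{\mathsf O,\mathsf o\}$) or ($L_k\in\{\mathsf R,\mathsf r\}$ and $L_{k'}\in\{\mathsf C,\mathsf c\}$). Its edge configurations are all configurations in $[\mathsf O]\,[\mathsf O\mathsf R\mathsf C\mathsf X]$, $[\mathsf O\mathsf R]\,[\mathsf O\mathsf R]$, $[\mathsf O\mathsf C]\,[\mathsf O\mathsf C]$, $[\mathsf o]\,[\mathsf o\mathsf r\mathsf c\mathsf x]$ and $[\mathsf o\mathsf r]\,[\mathsf o\mathsf c]$, where $[XY]\,[ZW]$ means one entry is from the first set and the other from the second. *)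

(* Defs.v *)
From HB Require Import structures.
From mathcomp Require Import all_boot.
Set Implicit Arguments. Unset Strict Implicit. Unset Printing Implicit Defensive.

(** A node configuration is represented by a Delta-tuple of labels
    (a function 'I_D -> lab, position j = j-th half-edge); all node
    predicates defined below are permutation-invariant, so they describe
    multisets.  Edge predicates are symmetric (unordered pairs). *)
Record NEC (D : nat) := MkNEC {
  lab : finType;
  nodeC : pred {ffun 'I_D -> lab};
  edgeC : lab -> lab -> bool
}.
Arguments MkNEC {D}.
Arguments lab {D} _.
Arguments nodeC {D} _ _.
Arguments edgeC {D} _ _ _.

Definition relax0 (D : nat) (P Q : NEC D) : Prop :=
  exists f : {ffun 'I_D -> lab P} -> 'I_D -> lab Q,
    (forall C, nodeC P C -> nodeC Q [ffun j => f C j]) /\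
    (forall C C' (j j' : 'I_D), nodeC P C -> nodeC P C' ->
       edgeC P (C j) (C' j') -> edgeC Q (f C j) (f C' j')).

Definition prodNEC (D : nat) (P Q : NEC D) : NEC D :=
  MkNEC (lab P * lab Q)%type
    (fun C => nodeC P [ffun j => (C j).1] && nodeC Q [ffun j => (C j).2])
    (fun a b => edgeC P a.1 b.1 && edgeC Q a.2 b.2).

(** Colors 1..D are represented by 'I_D, label k standing for color k+1. *)
Definition isOne (D : nat) (y : 'I_D) : bool := val y == 0.

Definition EC (D : nat) : NEC D :=
  MkNEC ('I_D) (fun C => injectiveb C) (fun a b => a == b).

Definition PiD_edge (D : nat) (a b : 'I_D * 'I_D) : bool :=
  let: (y, z) := a in let: (y', z') := b in
  [|| [&& ~~ isOne y, ~~ isOne z, y != y' & z != z'],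
      [&& ~~ isOne y', ~~ isOne z', y != y' & z != z'],
      [&& isOne y, isOne y', ~~ isOne z, ~~ isOne z' & z != z']
    | [&& isOne z, isOne z', ~~ isOne y, ~~ isOne y' & y != y']].

Definition PiD (D : nat) : NEC D :=
  MkNEC ('I_D * 'I_D)%type
    (fun C => [exists c, forall j, C j == c])
    (@PiD_edge D).

Inductive letter := lO | lR | lC | lX.

Definition letter_to (l : letter) : 'I_4 :=
  match l with lO => inord 0 | lR => inord 1 | lC => inord 2 | lX => inord 3 end.
Definition letter_of (i : 'I_4) : option letter :=
  match val i with 0 => Some lO | 1 => Some lR | 2 => Some lC | 3 => Some lX
  | _ => None end.
Lemma letter_toK : pcancel letter_to letter_of.
Proof. by case; rewrite /letter_of /= inordK. Qed.
HB.instance Definition _ := Finite.copy letter (pcan_type letter_toK).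

(** A label is a pair (b, l): b = true means the label is in Sigma_1
    (upper case O R C X), b = false means Sigma_2 (lower case o r c x). *)
Definition orcx_lab := (bool * letter)%type.

Definition inOo (a : orcx_lab) := a.2 == lO.
Definition inXx (a : orcx_lab) := a.2 == lX.
Definition inRr (a : orcx_lab) := a.2 == lR.
Definition inCc (a : orcx_lab) := a.2 == lC.

Definition orcx_node (D : nat) (L : {ffun 'I_D -> orcx_lab}) : bool :=
  (#|[pred k | (L k).1]| == 1) &&
  [exists k, exists k', [&& k != k',
     [forall k'', ((k'' != k) && (k'' != k')) ==> inOo (L k'')] &
     ((inXx (L k) && inOo (L k')) || (inRr (L k) && inCc (L k')))]].

Definition orcx_edge_dir (a b : orcx_lab) : bool :=
  [|| (a == (true, lO)) && b.1,                                        (* [O][ORCX] *)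
      [&& a.1, b.1, a.2 \in [:: lO; lR] & b.2 \in [:: lO; lR]],        (* [OR][OR] *)
      [&& a.1, b.1, a.2 \in [:: lO; lC] & b.2 \in [:: lO; lC]],        (* [OC][OC] *)
      (a == (false, lO)) && ~~ b.1                                     (* [o][orcx] *)
    | [&& ~~ a.1, ~~ b.1, a.2 \in [:: lO; lR] & b.2 \in [:: lO; lC]]]. (* [or][oc] *)

Definition orcx_edge (a b : orcx_lab) : bool := orcx_edge_dir a b || orcx_edge_dir b a.

Definition Piorcx (D : nat) : NEC D :=
  MkNEC orcx_lab (@orcx_node D) orcx_edge.

(* Main.v *)
Require Import Defs.
From mathcomp Require Import all_boot.
Definition lcode (l : letter) : nat := match l with lO => 0 | lR => 1 | lC => 2 | lX => 3 end.
Lemma leqE (a b : letter) : (a == b) = (lcode a == lcode b).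
Proof. by apply/eqP/eqP => [->//|]; case: a; case: b. Qed.
Ltac oe := rewrite /orcx_edge /orcx_edge_dir !inE /= ?xpair_eqE /= ?leqE /=.

Definition g (y z i : nat) : orcx_lab :=
 if i == 0 then (true, if y == 0 then (if z == 0 then lX else lR) else if z == 0 then lC else lO)
 else (false, if (y != 0) && (i == y) then (if z == y then lX else lR)
              else if (z != 0) && (i == z) then lC else lO).

Lemma edge_nat y z y' z' i :
  [|| [&& y!=0, z!=0, y!=y' & z!=z'], [&& y'!=0, z'!=0, y != y' & z != z'],
      [&& y==0, y'==0, z!=0, z'!=0 & z!=z'] | [&& z==0, z'==0, y!=0, y'!=0 & y!=y']] ->
  orcx_edge (g y z i) (g y' z' i).
Proof.
rewrite /g.
have [hi|hi] := eqVneq i 0.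
  subst i.
  by case: (y =P 0) => [?|?]; case: (z =P 0) => [?|?]; case: (y' =P 0) => [?|?]; case: (z' =P 0) => [?|?]; subst => //=; oe; rewrite ?orbT.
case: (y =P 0) => [?|hy]; case: (z =P 0) => [?|hz]; case: (y' =P 0) => [?|hy']; case: (z' =P 0) => [?|hz'] => //=; subst => //=;
repeat (case: eqP => //= ; try (move=> ?; subst)); oe; rewrite ?orbT //.
all: idtac.
Qed.

Ltac fin := rewrite /inOo /inXx /inRr /inCc /= ?leqE /=.
Lemma wit_nat (D y z : nat) : 1 < D -> y < D -> z < D -> exists a b : nat, [/\ a < D, b < D, a != b,
  (forall i, i != a -> i != b -> inOo (g y z i)) &
  (inXx (g y z a) && inOo (g y z b)) || (inRr (g y z a) && inCc (g y z b))].
Proof.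
move=> D1 yD zD. have D0 : 0 < D := ltnW D1.
case: (y =P 0) => [->|/eqP hy]; case: (z =P 0) => [->|/eqP hz].
- exists 0, 1; split => //; last by rewrite /g /=; fin.
  move=> i /negbTE h0 _; by rewrite /g h0 /=; fin.
- have hz' : 0 != z by rewrite eq_sym.
  exists 0, z; split => //.
  + move=> i /negbTE h0 /negbTE h1; by rewrite /g h0 /= h1 andbF /=; fin.
  + by rewrite /g /= ?(negbTE hz) ?(negbTE hz') ?eqxx /=; fin.
- have hy' : 0 != y by rewrite eq_sym.
  exists y, 0; split => //.
  + move=> i /negbTE h0 /negbTE h1; by rewrite /g h1 /= h0 andbF /=; fin.
  + by rewrite /g /= ?(negbTE hy) ?(negbTE hy') ?eqxx /=; fin.
have hy' : 0 != y by rewrite eq_sym.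
have hz' : 0 != z by rewrite eq_sym.
case: (z =P y) => [hzy|/eqP hzy].
- exists y, 0; split => //.
  + move=> i /negbTE h0 /negbTE h1; by rewrite /g h1 /= h0 andbF /= hzy h0 andbF /=; fin.
  + by rewrite /g /= hzy ?(negbTE hy) ?(negbTE hy') ?eqxx /=; fin.
- have hyz : y != z by rewrite eq_sym.
  exists y, z; split => //.
  + move=> i /negbTE h0 /negbTE h1; rewrite /g h0 h1 !andbF /=.
    by case: (i =P 0); rewrite ?(negbTE hy) ?(negbTE hz); fin.
  + rewrite /g /= ?(negbTE hy) ?(negbTE hz) ?(negbTE hy') ?(negbTE hz') ?eqxx.
    by rewrite ?(negbTE hzy) ?(negbTE hyz) /= ?eqxx /=; fin.
Qed.

Lemma g1 y z i : (g y z i).1 = (i == 0).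
Proof. by rewrite /g; case: ifP. Qed.

Theorem mainTheorem17 (D : nat) (hD : 3 <= D) :
  relax0 (prodNEC (PiD D) (EC D)) (Piorcx D).
Proof.
exists (fun C j => g (val (C j).1.1) (val (C j).1.2) (val (C j).2)).
split.
- move=> C /andP [/existsP [[y z] /forallP hc] /injectiveP inj].
  have hC : forall j, (C j).1 = (y,z) by move=> j; move/eqP: (hc j); rewrite ffunE.
  pose col := fun j => (C j).2.
  have injc : injective col.
    by move=> a b h; apply: inj; rewrite !ffunE.
  have D1 : 1 < D by apply: leq_trans hD.
  have D0 : 0 < D by apply: ltnW.
  have hL : forall k, [ffun j => g (val (C j).1.1) (val (C j).1.2) (val (C j).2)] k
                     = g y z (val (col k)).
    by move=> k; rewrite ffunE hC.
  rewrite /= /orcx_node; apply/andP; split.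
  + pose k0 := invF injc (Ordinal D0).
    apply/eqP; rewrite -(card1 k0); apply: eq_card => k.
    rewrite !inE hL g1.
    apply/eqP/eqP => [h|->]; last by rewrite /k0 f_invF.
    apply: (injc); rewrite /k0 f_invF; exact: val_inj.
  + have [a [b [aD bD ab hO hab]]] := @wit_nat D y z D1 (ltn_ord y) (ltn_ord z).
    pose ka := invF injc (Ordinal aD).
    pose kb := invF injc (Ordinal bD).
    have ca : val (col ka) = a by rewrite /ka f_invF.
    have cb : val (col kb) = b by rewrite /kb f_invF.
    apply/existsP; exists ka; apply/existsP; exists kb.
    apply/and3P; split.
    * apply/eqP => e; move/eqP: ab; apply; by rewrite -ca -cb e.
    * apply/forallP => k; apply/implyP => /andP [nka nkb].
      rewrite hL; apply: hO.
      -- apply/eqP => e; move/eqP: nka; apply; apply: (injc).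
         apply: val_inj; by rewrite ca.
      -- apply/eqP => e; move/eqP: nkb; apply; apply: (injc).
         apply: val_inj; by rewrite cb.
    * by rewrite !hL ca cb.
- move=> C C' j j' _ _ /=.
  case: (C j) => [[y z] c]; case: (C' j') => [[y' z'] c'] /= /andP [he /eqP ->].
  apply: edge_nat; move: he; rewrite /PiD_edge /isOne.
  by rewrite -!val_eqE.
Qed.
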